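(* For every integer $m\ge2$, let $\rho_m=\sin^{-2}\frac{\pi}{2m}$. Then $\frac{\rho_m}{2}$ is an algebraic integer. *)

(* Defs.v *)
From mathcomp Require Import all_boot all_order all_algebra.
From mathcomp Require Import all_classical all_reals all_analysis.
Set Implicit Arguments. Unset Strict Implicit. Unset Printing Implicit Defensive.
Import Order.TTheory GRing.Theory Num.Theory.
Local Open Scope ring_scope.

Definition algebraic_integer (R : realType) (x : R) : Prop :=
  integralOver (fun z : int => z%:~R : R) x.

Definition rho (R : realType) (m : nat) : R :=
  (sin (pi / (2 * m%:R)))^-2.

(* Main.v *)
Require Import Defs.
From mathcomp Require Import all_boot all_order all_algebra.
From mathcomp Require Import all_classical all_reals all_analysis.
From mathcomp Require Import ring lra.
Import Order.TTheory GRing.Theory Num.Theory.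
Local Open Scope ring_scope.
Fixpoint Rpair (a : {poly int}) (k : nat) : {poly int} * {poly int} :=
  match k with
  | 0 => (1, a)
  | k'.+1 => let (p, q) := Rpair a k' in
             (q, ('X - 1) * q + ('X - 1) * q - 'X^2 * p)
  end.

Lemma Rpair_size (c : int) k :
  leq (size ((Rpair ('X - c%:P) k).1 - 'X^k)) k /\
  leq (size ((Rpair ('X - c%:P) k).2 - 'X^(k.+1))) k.+1.
Proof.
elim: k => [|k [IH1 IH2]] /=.
  rewrite expr0 subrr size_poly0; split => //.
  by rewrite expr1 addrAC subrr sub0r size_polyN size_polyC_leq1.
move: IH1 IH2; case: (Rpair _ k) => p q /= IH1 IH2; split => //.
set D := p - 'X^k; set E := q - 'X^(k.+1).
have -> : ('X - 1) * q + ('X - 1) * q - 'X^2 * p - 'X^(k.+2) =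
   ('X - 1) * E + ('X - 1) * E - ('X^2 * D + 'X^(k.+1) + 'X^(k.+1)).
  rewrite /D /E !exprS; ring.
have hX1 : size ('X - 1 : {poly int}) = 2 by rewrite -polyC1 size_XsubC.
have hE : leq (size (('X - 1) * E)) k.+2.
  by apply: leq_trans (size_polyMleq _ _) _; rewrite hX1.
apply: leq_trans (size_polyD _ _) _; rewrite geq_max; apply/andP; split.
  by apply: leq_trans (size_polyD _ _) _; rewrite geq_max hE.
rewrite size_polyN; apply: leq_trans (size_polyD _ _) _; rewrite geq_max; apply/andP; split.
  apply: leq_trans (size_polyD _ _) _; rewrite geq_max; apply/andP; split.
    by apply: leq_trans (size_polyMleq _ _) _; rewrite size_polyXn.
  by rewrite size_polyXn.
by rewrite size_polyXn.
Qed.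

Lemma Rpair_monic (c : int) k : (Rpair ('X - c%:P) k).1 \is monic.
Proof.
have [H _] := Rpair_size c k.
have -> : (Rpair ('X - c%:P) k).1 = 'X^k + ((Rpair ('X - c%:P) k).1 - 'X^k).
  by rewrite addrCA subrr addr0.
by rewrite monicE lead_coefDl ?lead_coefXn // size_polyXn ltnS.
Qed.
Lemma ev (R : realType) (x : R) (p q : {poly int}) :
  (map_poly (fun z : int => z%:~R : R) (('X - 1) * q + ('X - 1) * q - 'X^2 * p)).[x]
  = (x - 1) * (map_poly (fun z : int => z%:~R : R) q).[x] *+ 2 - x^+2 * (map_poly (fun z : int => z%:~R : R) p).[x].
Proof.
change (fun z : int => z%:~R : R) with (intr : int -> R).
rewrite !rmorphB !rmorphD !rmorphM /= !rmorphB /= map_polyX rmorph1 !hornerE.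
ring.
Qed.
Lemma ev2 (R : realType) (x : R) (c : int) :
  (map_poly (fun z : int => z%:~R : R) ('X - c%:P)).[x] = x - c%:~R.
Proof. by rewrite rmorphB /= map_polyX map_polyC !hornerE. Qed.
Lemma cos_sum (R : realType) (a b : R) : cos (a + b) + cos (a - b) = (cos a * cos b) *+ 2.
Proof. rewrite cosD cosB; ring. Qed.

Lemma step (R : realType) (x th phi lam Q P : R) k
 (hx : x * (1 - cos (th *+ 2)) = 1)
 (IH1 : P * lam = x ^+ k * cos (phi + th *+ (2 * k)))
 (IH2 : Q * lam = x ^+ k.+1 * cos (phi + th *+ (2 * k.+1))) :
 ((x - 1) * Q *+ 2 - x^+2 * P) * lam = x ^+ k.+2 * cos (phi + th *+ (2 * k.+2)).
Proof.
have -> : ((x - 1) * Q *+ 2 - x^+2 * P) * lam = ((x - 1) * (Q * lam)) *+ 2 - x^+2 * (P * lam) by ring.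
rewrite IH1 IH2.
set a := phi + th *+ (2 * k.+1).
have e1 : phi + th *+ (2 * k.+2) = a + th *+ 2.
  by rewrite /a !mulnS !mulrnDr; lra.
have e0 : phi + th *+ (2 * k) = a - th *+ 2.
  by rewrite /a !mulnS !mulrnDr; lra.
have hc : x * cos (th *+ 2) = x - 1 by lra.
have e2 : cos (a + th *+ 2) = (cos a * cos (th *+ 2)) *+ 2 - cos (a - th *+ 2).
  by rewrite -cos_sum addrK.
rewrite e1 e0 e2.
have -> : x ^+ k.+2 * ((cos a * cos (th *+ 2)) *+ 2 - cos (a - th *+ 2)) =
   (x ^+ k.+1 * (cos a * (x * cos (th *+ 2)))) *+ 2 - x^+2 * (x ^+ k * cos (a - th *+ 2)).
  by rewrite !exprS; ring.
rewrite hc !exprS; ring.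
Qed.
Lemma key (R : realType) (x th phi lam : R) (c : int)
 (hx : x * (1 - cos (th *+ 2)) = 1) (h0 : lam = cos phi)
 (h1 : (x - c%:~R) * lam = x * cos (phi + th *+ 2)) k :
 (map_poly (fun z : int => z%:~R : R) (Rpair ('X - c%:P) k).1).[x] * lam
   = x ^+ k * cos (phi + th *+ (2 * k)) /\
 (map_poly (fun z : int => z%:~R : R) (Rpair ('X - c%:P) k).2).[x] * lam
   = x ^+ k.+1 * cos (phi + th *+ (2 * k.+1)).
Proof.
elim: k => [|n IH].
  rewrite /= rmorph1 hornerC mul1r expr0 mul1r mulr0n addr0 h0; split => //.
  by rewrite ev2 expr1 -h1 h0.
move: IH => /=; case: (Rpair _ n) => p q /= [IH1 IH2]; split => //.
rewrite ev; exact: step.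
Qed.

Theorem lemma4p1 (R : realType) (m : nat) (hm : (2 <= m)%N) :
  algebraic_integer (rho R m / 2).
Proof.
rewrite /algebraic_integer /rho.
set th := pi / (2 * m%:R).
set x := (sin th)^-2 / 2.
have m0 : (m%:R : R) != 0 by rewrite pnatr_eq0 -lt0n (leq_trans _ hm).
have m2 : (2 : R) <= m%:R by rewrite (ler_nat R 2 m).
have hmth : th * m%:R = pi / 2 by rewrite /th; field; rewrite m0.
have pi0 : (0 : R) < pi := pi_gt0 R.
have th0 : 0 < th by rewrite /th divr_gt0 // mulr_gt0 // ltr0n (leq_trans _ hm).
have ths : th < pi / 2 by nra.
have sth : 0 < sin th by apply: sin_gt0_pihalf; rewrite th0 ths.
have cth : 0 < cos th by apply: cos_gt0_pihalf; rewrite ths andbT; lra.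
have hx : x * (1 - cos (th *+ 2)) = 1.
  rewrite mulr2n cosD -!expr2 cos2sin2 /x; field.
  by rewrite gt_eqF.
have hc : x * cos (th *+ 2) = x - 1 by lra.
have hmpi : cos (th *+ m) = 0 by rewrite -mulr_natr hmth cos_pihalf.
have [k hk] : exists k, m = (2 * k)%N \/ m = (2 * k).+1.
  exists m./2; rewrite mul2n; move: (odd_double_half m).
  by case: (odd m) => /= h; [right|left]; rewrite -{1}h.
case: hk => hk.
- have h1 : (x - 1%:~R) * 1 = x * cos (0 + th *+ 2) by rewrite mulr1 add0r hc.
  have [K _] := @key R x th 0 1 1 hx (esym (cos0 R)) h1 k.
  exists (Rpair ('X - 1%:P) k).1; first exact: Rpair_monic.
  apply/rootP; move: K; rewrite mulr1 add0r -hk hmpi mulr0.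
  by [].
- have h1 : (x - 2%:~R) * cos th = x * cos (th + th *+ 2).
    have e := cos_sum _ (th *+ 2) th.
    have e2 : th *+ 2 - th = th by rewrite mulr2n addrK.
    rewrite e2 addrC in e.
    have -> : cos (th + th *+ 2) = (cos (th *+ 2) * cos th) *+ 2 - cos th by rewrite addrC; lra.
    rewrite mulrBr mulrnAr mulrA hc; simpl; lra.
  have [K _] := @key R x th th (cos th) 2 hx erefl h1 k.
  exists (Rpair ('X - 2%:P) k).1; first exact: Rpair_monic.
  apply/rootP; move: K.
  have -> : th + th *+ (2 * k) = th *+ m by rewrite hk mulrS.
  rewrite hmpi mulr0 => /eqP; rewrite mulf_eq0 (gt_eqF cth) orbF => /eqP.
  by [].
Qed.
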